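(* The set function $\mu^*$ has the following properties. (i) Monotonicity: if $A \subseteq B \subseteq \Omega$ then $\mu^*(A) \le \mu^*(B)$. (ii) Countable subadditivity: for any sequence of sets $A_n \subseteq \Omega$, $n \in \mathbb{N}$, one has $\mu^*\big(\bigcup_{n\in\mathbb{N}} A_n\big) \le \sum_{n\in\mathbb{N}} \mu^*(A_n)$. (iii) Singletons: if $\mathcal{P} = \{\mathbb{P}\}$ consists of a single probability measure, then $\mu^*(A) = \mathbb{P}(A)$ for every $A \in \mathcal{F}$. In particular (since $\mu^*(\emptyset)=0$), $\mu^*$ is an outer measure on $\Omega$.
   Context: Standing setup: $(\Omega, (\mathcal{F}_t)_{t\in\mathbb{N}_0}, \mathcal{F})$ is a filtered measurable space with $\mathcal{F} = \sigma\big(\bigcup_{t} \mathcal{F}_t\big)$. A stopping time is a map $\tau:\Omega\to\mathbb{N}_0\cup\{\infty\}$ with $\{\tau \le t\}\in\mathcal{F}_t$ for all $t$; $\mathcal{T}$ denotes the set of all stopping times. $\mathcal{P}$ is an arbitrary family of probability measures on $\mathcal{F}$. The inverse-capital measure is the $[0,1]$-valued set function defined for every $A\subseteq\Omega$ by $$\mu^*(A) = \inf_{\tau\in\mathcal{T}:\, A\subseteq\{\tau<\infty\}} \ \sup_{\mathbb{P}\in\mathcal{P}} \mathbb{P}(\tau<\infty).$$ *)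

(* Defs.v *)
From HB Require Import structures.
From mathcomp Require Import all_boot all_order all_algebra.
From mathcomp Require Import all_classical all_reals all_analysis.
Set Implicit Arguments. Unset Strict Implicit. Unset Printing Implicit Defensive.
Import Order.TTheory GRing.Theory Num.Theory.
Local Open Scope classical_set_scope.
Local Open Scope ring_scope.

(** Stopping times take values in N_0 ∪ {∞}, encoded as [option nat]
    ([Some t] = time t, [None] = ∞). *)
Section InverseCapital.
Context {T : Type}.

Definition tau_le (tau : T -> option nat) (t : nat) : set T :=
  [set w | exists s, tau w = Some s /\ (s <= t)%N].

Definition tau_fin (tau : T -> option nat) : set T :=
  [set w | exists s, tau w = Some s].

Definition stopping_time (Ft : nat -> set (set T)) (tau : T -> option nat) :=
  forall t, Ft t (tau_le tau t).

End InverseCapital.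

Section MuStar.
Context {d : measure_display} {T : measurableType d} {R : realType}.

(** sup_{P in Pfam} P(B), taken in [0,1] (so the sup of the empty family is 0) *)
Definition sup_prob (Pfam : set (probability T R)) (B : set T) : \bar R :=
  ereal_sup ([set 0%E] `|` [set P B | P in Pfam]).

Definition mu_star (Ft : nat -> set (set T)) (Pfam : set (probability T R))
    (A : set T) : \bar R :=
  ereal_inf [set sup_prob Pfam (tau_fin tau) |
             tau in [set tau | stopping_time Ft tau /\ A `<=` tau_fin tau]].

End MuStar.

(* Main.v *)
Require Import Defs.
From HB Require Import structures.
From mathcomp Require Import all_boot all_order all_algebra.
From mathcomp Require Import all_classical all_reals all_analysis.
Import Order.TTheory GRing.Theory Num.Theory.
Local Open Scope classical_set_scope.
Local Open Scope ring_scope.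
Set Implicit Arguments. Unset Strict Implicit. Unset Printing Implicit Defensive.

Section SA.
Context {T : Type} (G : set (set T)) (hG : sigma_algebra setT G).
Lemma sa0 : G set0. Proof. by case: hG. Qed.
Lemma saC A : G A -> G (~` A). Proof. by case: hG => _ h _ /h; rewrite setTD. Qed.
Lemma saU A B : G A -> G B -> G (A `|` B).
Proof. by case: hG => _ _ h GA GB; rewrite -bigcup2E; apply: h => -[|[|n]]//=; exact: sa0. Qed.
Lemma saT : G setT. Proof. by rewrite -setC0; apply: saC; exact: sa0. Qed.
Lemma saD A B : G A -> G B -> G (A `\` B).
Proof. move=> GA GB; have ->: A `\` B = ~` (~` A `|` B) by rewrite setCU setCK. by apply/saC/saU => //; exact: saC. Qed.
Lemma saUn (A : (set T)^nat) : (forall n, G (A n)) -> G (\bigcup_n A n).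
Proof. by case: hG => _ _; apply. Qed.
End SA.

Definition alg_of d (T : measurableType d) (Ft : nat -> set (set T))
  (h1 : forall t, sigma_algebra setT (Ft t))
  (h2 : forall s t, (s <= t)%N -> Ft s `<=` Ft t) : Type := T.

Section AlgOf.
Context d (T : measurableType d) (Ft : nat -> set (set T))
  (h1 : forall t, sigma_algebra setT (Ft t))
  (h2 : forall s t, (s <= t)%N -> Ft s `<=` Ft t).

Let U := \bigcup_t Ft t.
Lemma alg0 : U set0. Proof. by exists 0%N => //; exact: sa0. Qed.
Lemma algU : setU_closed U.
Proof.
move=> A B [s _ hs] [t _ ht]; exists (maxn s t) => //.
by apply: saU; [exact: h1| apply: h2 hs; exact: leq_maxl | apply: h2 ht; exact: leq_maxr].
Qed.
Lemma algD : setD_closed U.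
Proof.
move=> A B [s _ hs] [t _ ht]; exists (maxn s t) => //.
by apply: saD; [exact: h1| apply: h2 hs; exact: leq_maxl | apply: h2 ht; exact: leq_maxr].
Qed.
End AlgOf.

HB.instance Definition _ d (T : measurableType d) Ft h1 h2 :=
  Pointed.copy (@alg_of d T Ft h1 h2) T.
HB.instance Definition _ d (T : measurableType d) Ft h1 h2 :=
  @isRingOfSets.Build d (@alg_of d T Ft h1 h2) (\bigcup_t Ft t)
   (@alg0 d T Ft h1) (@algU d T Ft h1 h2) (@algD d T Ft h1 h2).

Definition Pr d (T : measurableType d) (Ft : nat -> set (set T)) h1 h2 (R : realType) (P : probability T R)
  (hm : forall t, Ft t `<=` measurable) : set (@alg_of d T Ft h1 h2) -> \bar R :=
  fun A => P A.

Section PrM.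
Context d (T : measurableType d) (Ft : nat -> set (set T))
  (h1 : forall t, sigma_algebra setT (Ft t))
  (h2 : forall s t, (s <= t)%N -> Ft s `<=` Ft t) (R : realType) (P : probability T R)
  (hm : forall t, Ft t `<=` measurable).
Local Open Scope ereal_scope.
Lemma Pr0 : @Pr d T Ft h1 h2 R P hm set0 = 0. Proof. exact: measure0. Qed.
Lemma Pr_ge0 A : 0 <= @Pr d T Ft h1 h2 R P hm A. Proof. exact: measure_ge0. Qed.
Lemma Pr_ssa : semi_sigma_additive (@Pr d T Ft h1 h2 R P hm).
Proof.
move=> F mF tF mUF; apply: measure_semi_sigma_additive => //.
- by move=> i; case: (mF i) => t _ /hm.
- by case: mUF => t _ /hm.
Qed.
End PrM.

HB.instance Definition _ d T Ft h1 h2 R P hm := isMeasure.Build _ _ _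
  (@Pr d T Ft h1 h2 R P hm) (@Pr0 d T Ft h1 h2 R P hm) (@Pr_ge0 d T Ft h1 h2 R P hm) (@Pr_ssa d T Ft h1 h2 R P hm).

Definition Pg d (T : measurableType d) (Ft : nat -> set (set T)) h1 h2 (R : realType)
  (P : probability T R) (HF : measurable = <<s \bigcup_t Ft t >>) :
  set (g_sigma_algebraType (@measurable _ (@alg_of d T Ft h1 h2))) -> \bar R :=
  fun A => P A.

Section PgM.
Context d (T : measurableType d) (Ft : nat -> set (set T))
  (h1 : forall t, sigma_algebra setT (Ft t))
  (h2 : forall s t, (s <= t)%N -> Ft s `<=` Ft t) (R : realType) (P : probability T R)
  (HF : measurable = <<s \bigcup_t Ft t >>).
Local Open Scope ereal_scope.
Lemma Pg0 : @Pg d T Ft h1 h2 R P HF set0 = 0. Proof. exact: measure0. Qed.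
Lemma Pg_ge0 A : 0 <= @Pg d T Ft h1 h2 R P HF A. Proof. exact: measure_ge0. Qed.
Lemma Pg_ssa : semi_sigma_additive (@Pg d T Ft h1 h2 R P HF).
Proof.
move=> F mF tF mUF; apply: measure_semi_sigma_additive => //.
- by move=> i; rewrite HF; exact: mF.
- by rewrite HF; exact: mUF.
Qed.
End PgM.

HB.instance Definition _ d T Ft h1 h2 R P HF := isMeasure.Build _ _ _
  (@Pg d T Ft h1 h2 R P HF) (@Pg0 d T Ft h1 h2 R P HF) (@Pg_ge0 d T Ft h1 h2 R P HF)
  (@Pg_ssa d T Ft h1 h2 R P HF).

Lemma outer_approx d (T : measurableType d) (Ft : nat -> set (set T))
  (h1 : forall t, sigma_algebra setT (Ft t))
  (h2 : forall s t, (s <= t)%N -> Ft s `<=` Ft t) (R : realType) (P : probability T R)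
  (HF : measurable = <<s \bigcup_t Ft t >>) (A : set T) (mA : measurable A)
  (eps : R) (he : 0 < eps) :
  exists F : (set T)^nat, [/\ forall k, exists t, Ft t (F k),
    A `<=` \bigcup_k F k & (P (\bigcup_k F k) <= P A + eps%:E)%E].
Proof.
have hm : forall t, Ft t `<=` measurable.
  by move=> t X FX; rewrite HF; apply: sub_gen_smallest; exists t.
pose mu := @Pr d T Ft h1 h2 R P hm.
have E : mu_ext mu A = P A.
  have := @measure_extension_unique d (@alg_of d T Ft h1 h2) R mu _
    (@Pg d T Ft h1 h2 R P HF) _ A.
  apply => //.
  - exists (fun=> setT); first by rewrite bigcup_const.
    move=> i; split; first by exists 0%N => //; exact: saT.
    by change (P setT < +oo)%E; rewrite probability_setT ltry.
  - by move: mA; rewrite HF.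
have : (mu_ext mu A < P A + eps%:E)%E.
  by rewrite E lteDl ?lte_fin // fin_num_measure.
case/ereal_inf_lt => _ [F [mF AF] <-] hlt.
exists F; split => //.
- by move=> k; case: (mF k) => t _ ?; exists t.
apply: le_trans (ltW hlt).
apply: measure_sigma_subadditive => //.
- by move=> k; case: (mF k) => t _ /hm.
- by apply: bigcupT_measurable => k; case: (mF k) => t _ /hm.
Qed.

Definition first_hit {T : Type} (D : nat -> set T) (w : T) : option nat :=
  match pselect (exists t, `[< D t w >]) with
  | left h => Some (ex_minn h) | right _ => None end.

Lemma first_hit_le {T : Type} (D : nat -> set T)
  (hinc : forall s t, (s <= t)%N -> D s `<=` D t) t :
  tau_le (first_hit D) t = D t.
Proof.
apply/seteqP; split => w /=.
- case=> s []; rewrite /first_hit; case: pselect => // h [<-].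
  by case: ex_minnP => m /asboolP Dm _ mt; exact: hinc mt _ Dm.
- move=> Dt; rewrite /tau_le /tau_fin /= /first_hit; case: (pselect (exists t, `[< D t w >])) => [h|nh]; last by case: nh; exists t; apply/asboolP.
  exists (ex_minn h); split => //.
  by case: (ex_minnP h) => m _ hmin; apply: hmin; apply/asboolP.
Qed.

Lemma first_hit_fin {T : Type} (D : nat -> set T) :
  tau_fin (first_hit D) = \bigcup_t D t.
Proof.
apply/seteqP; split => w /=.
- case=> s; rewrite /first_hit; case: pselect => // h _.
  by case: (ex_minnP h) => m /asboolP Dm _; exists m.
- case=> t _ Dt; rewrite /tau_fin /= /first_hit; case: (pselect (exists t, `[< D t w >])) => [h|nh]; last by case: nh; exists t; apply/asboolP.
  by exists (ex_minn h).
Qed.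

Lemma tau_le_fin {T : Type} (tau : T -> option nat) :
  tau_fin tau = \bigcup_t tau_le tau t.
Proof.
apply/seteqP; split => w /=.
- by case=> s e; exists s => //; exists s.
- by case=> t _ [s [e _]]; exists s.
Qed.

Section Main.
Local Open Scope ereal_scope.
Context (d : measure_display) (T : measurableType d) (R : realType)
    (Ft : nat -> set (set T))
    (HFt_sigma : forall t, sigma_algebra setT (Ft t))
    (HFt_incr : forall s t, (s <= t)%N -> Ft s `<=` Ft t)
    (HF : measurable = <<s \bigcup_t Ft t >>)
    (Pfam : set (probability T R)).

Let hm : forall t, Ft t `<=` measurable.
Proof. by move=> t X FX; rewrite HF; apply: sub_gen_smallest; exists t. Qed.

Let fin_meas tau : stopping_time Ft tau -> measurable (tau_fin tau).
Proof. by move=> st; rewrite tau_le_fin; apply: bigcupT_measurable => t; exact: hm (st t). Qed.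

Let stop_hit (D : nat -> set T) : (forall t, Ft t (D t)) ->
  (forall s t, (s <= t)%N -> D s `<=` D t) -> stopping_time Ft (first_hit D).
Proof. by move=> hD hinc t; rewrite first_hit_le. Qed.

Let sp_ge0 B : 0 <= sup_prob Pfam B.
Proof. by apply: ereal_sup_ubound; left. Qed.

Let sp_le B x : 0 <= x -> (forall P, Pfam P -> P B <= x) -> sup_prob Pfam B <= x.
Proof. by move=> x0 h; apply: ge_ereal_sup => _ [->//|[P PP <-]]; exact: h. Qed.

Let sp_ub B P : Pfam P -> P B <= sup_prob Pfam B.
Proof. by move=> PP; apply: ereal_sup_ubound; right; exists P. Qed.

Let ms_lb A tau : stopping_time Ft tau -> A `<=` tau_fin tau ->
  mu_star Ft Pfam A <= sup_prob Pfam (tau_fin tau).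
Proof. by move=> st sub; apply: ereal_inf_lbound; exists tau. Qed.

Let ms_ge A x : (forall tau, stopping_time Ft tau -> A `<=` tau_fin tau ->
  x <= sup_prob Pfam (tau_fin tau)) -> x <= mu_star Ft Pfam A.
Proof. by move=> h; apply: le_ereal_inf_tmp => _ [tau [st sub] <-]; exact: h. Qed.

Let ms_ge0 A : 0 <= mu_star Ft Pfam A.
Proof. by apply: ms_ge => *; exact: sp_ge0. Qed.

Let ms_le1 A : mu_star Ft Pfam A <= 1.
Proof.
have st := @stop_hit (fun=> setT) (fun t => saT (HFt_sigma t)) (fun _ _ _ _ hx => hx).
have fE : tau_fin (first_hit (fun=> @setT T)) = setT.
  by rewrite first_hit_fin bigcup_const.
apply: (le_trans (ms_lb (A:=A) st _)); first by rewrite fE.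
by apply: sp_le => // P _; rewrite fE probability_setT.
Qed.

Let ms0 : mu_star Ft Pfam set0 = 0.
Proof.
apply/eqP; rewrite eq_le ms_ge0 andbT.
have st := @stop_hit (fun=> set0) (fun t => sa0 (HFt_sigma t)) (fun _ _ _ _ hx => hx).
have fE : tau_fin (first_hit (fun=> @set0 T)) = set0.
  by rewrite first_hit_fin bigcup_const.
apply: (le_trans (ms_lb (A:=set0) st _)); first by rewrite fE.
by apply: sp_le => // P _; rewrite fE measure0.
Qed.

Let ms_mono A B : A `<=` B -> mu_star Ft Pfam A <= mu_star Ft Pfam B.
Proof. move=> AB; apply: ms_ge => tau st sub; apply: ms_lb st _; exact: subset_trans AB sub. Qed.

Let ms_single P : Pfam = [set P] -> forall A, measurable A -> mu_star Ft Pfam A = P A.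
Proof.
move=> PE A mA; apply/eqP; rewrite eq_le; apply/andP; split; last first.
  apply: ms_ge => tau st sub; apply: (le_trans _ (sp_ub _ (P:=P) _)); last by rewrite PE.
  by apply: le_measure => //; rewrite inE //; exact: fin_meas.
apply/lee_addgt0Pr => e e0.
have [F [hF AF hP]] := outer_approx HFt_sigma HFt_incr P HF mA e0.
pose D t := \bigcup_k (if `[< Ft t (F k) >] then F k else set0).
have hD t : Ft t (D t).
  apply: (saUn (HFt_sigma t)) => k; case: asboolP => // _; exact: (sa0 (HFt_sigma t)).
have hinc s t : (s <= t)%N -> D s `<=` D t.
  move=> st w [k _]; case: asboolP => // Fs Fkw; exists k => //.
  case: asboolP => // nF; exfalso; apply: nF; exact: HFt_incr st _ Fs.
have UE : \bigcup_t D t = \bigcup_k F k.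
  apply/seteqP; split => w.
  - by case=> t _ [k _]; case: asboolP => // _ Fw; exists k.
  - case=> k _ Fw; case: (hF k) => t Ft_; exists t => //; exists k => //.
    by case: asboolP.
have st := stop_hit hD hinc.
apply: (le_trans (ms_lb (A:=A) st _)); first by rewrite first_hit_fin UE.
rewrite first_hit_fin UE; apply: sp_le.
  by apply: adde_ge0 => //; rewrite lee_fin ltW.
by move=> Q; rewrite PE => ->.
Qed.

Let ms_sub (A : (set T)^nat) :
  mu_star Ft Pfam (\bigcup_n A n) <= \sum_(n <oo) mu_star Ft Pfam (A n).
Proof.
apply/lee_addgt0Pr => e e0.
have : forall n, exists tau, [/\ stopping_time Ft tau, A n `<=` tau_fin tau &
   sup_prob Pfam (tau_fin tau) <= mu_star Ft Pfam (A n) + (e / (2 ^ n.+1)%:R)%:E].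
  move=> n.
  have fin : mu_star Ft Pfam (A n) \is a fin_num.
    by rewrite ge0_fin_numE ?ms_ge0 // (le_lt_trans (ms_le1 _)) ?ltry.
  have : mu_star Ft Pfam (A n) < mu_star Ft Pfam (A n) + (e / (2 ^ n.+1)%:R)%:E.
    by rewrite lteDl // lte_fin divr_gt0 // ltr0n expn_gt0.
  case/ereal_inf_lt => _ [tau [st sub] <-] lt; exists tau; split => //; exact: ltW.
case/choice => tau htau.
pose D t := \bigcup_n tau_le (tau n) t.
have hD t : Ft t (D t).
  by apply: (saUn (HFt_sigma t)) => n; case: (htau n) => st _ _; exact: st t.
have hinc s t : (s <= t)%N -> D s `<=` D t.
  move=> st w [n _ [u [e1 us]]]; exists n => //; exists u; split => //; exact: leq_trans us st.
have UE : \bigcup_t D t = \bigcup_n tau_fin (tau n).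
  apply/seteqP; split => w.
  - by case=> t _ [n _ [u [e1 _]]]; exists n => //; exists u.
  - by case=> n _ [u e1]; exists u => //; exists n => //; exists u.
have stt := stop_hit hD hinc.
apply: (le_trans (ms_lb (A:=\bigcup_n A n) stt _)).
  rewrite first_hit_fin UE => w [n _ Aw]; exists n => //.
  by case: (htau n) => _ sub _; exact: sub.
rewrite first_hit_fin UE; apply: sp_le.
  by apply: adde_ge0; [apply: nneseries_ge0 => n _ _; exact: ms_ge0 | rewrite lee_fin ltW].
move=> P PP.
have mF n : measurable (tau_fin (tau n)) by case: (htau n) => st _ _; exact: fin_meas.
apply: (le_trans _ (epsilon_trick xpredT (fun n => ms_ge0 (A n)) (ltW e0))).
have hs : P (\bigcup_n tau_fin (tau n)) <= \sum_(n<oo) P (tau_fin (tau n)).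
  by apply: measure_sigma_subadditive => //; exact: bigcupT_measurable.
apply: (le_trans hs).
apply: lee_nneseries => [n _ _|n _]; first exact: measure_ge0.
case: (htau n) => _ _ h; apply: le_trans h; exact: sp_ub.
Qed.

Lemma main_all : [/\ (forall A B : set T, A `<=` B ->
         (mu_star Ft Pfam A <= mu_star Ft Pfam B)%E),
      (forall A : (set T)^nat,
         (mu_star Ft Pfam (\bigcup_n A n) <= \sum_(n <oo) mu_star Ft Pfam (A n))%E),
      (forall P : probability T R, Pfam = [set P] ->
         forall A : set T, measurable A -> mu_star Ft Pfam A = P A),
      (forall A : set T, (0 <= mu_star Ft Pfam A)%E /\ (mu_star Ft Pfam A <= 1)%E) &
      mu_star Ft Pfam set0 = 0%E].
Proof. split; [exact: ms_mono|exact: ms_sub|exact: ms_single|move=> A; split; [exact: ms_ge0|exact: ms_le1]|exact: ms0]. Qed.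

End Main.

Unset Implicit Arguments.
Set Strict Implicit.

Theorem mainTheorem1 (d : measure_display) (T : measurableType d) (R : realType)
    (Ft : nat -> set (set T))
    (HFt_sigma : forall t, sigma_algebra setT (Ft t))
    (HFt_incr : forall s t, (s <= t)%N -> Ft s `<=` Ft t)
    (HF : measurable = <<s \bigcup_t Ft t >>)
    (Pfam : set (probability T R)) :
  [/\ (* (i) monotonicity *)
      (forall A B : set T, A `<=` B ->
         (mu_star Ft Pfam A <= mu_star Ft Pfam B)%E),
      (* (ii) countable subadditivity *)
      (forall A : (set T)^nat,
         (mu_star Ft Pfam (\bigcup_n A n) <= \sum_(n <oo) mu_star Ft Pfam (A n))%E),
      (* (iii) singletons *)
      (forall P : probability T R, Pfam = [set P] ->
         forall A : set T, measurable A -> mu_star Ft Pfam A = P A),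
      (* values in [0,1] *)
      (forall A : set T, (0 <= mu_star Ft Pfam A)%E /\ (mu_star Ft Pfam A <= 1)%E) &
      (* in particular: outer measure *)
      mu_star Ft Pfam set0 = 0%E].
Proof. exact: main_all. Qed.
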